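(* Let $\mathcal{H}$ be a normed vector space, $c:\mathcal{H}\to[0,\infty)$ a scale function, $\mathcal{R}:\mathcal{H}\to[0,\infty)$ a regularizer, and let $\mathcal{L},\mathcal{L}_\eta:\mathcal{H}\to\mathbb{R}$ be the expected loss on original data and on perturbed data, and $\widehat{\mathcal{L}}_\eta$ the (random) empirical loss on $n$ perturbed samples. Assume: (A) (scaled uniform convergence) with probability at least $1-\delta$ over the $n$ samples, $|\widehat{\mathcal{L}}_\eta(\theta)-\mathcal{L}_\eta(\theta)|\le\varepsilon_{n,\delta}\,c(\theta)$ for all $\theta\in\mathcal{H}$; (B) (super-scale regularization) there is $r:[0,\infty)\to[0,\infty)$ with $z\le r(z)$ for all $z\ge0$ and $r(c(\theta))\le\mathcal{R}(\theta)<\infty$ for all $\theta\in\mathcal{H}$; (C) (bounded perturbed loss) $|\mathcal{L}_\eta(\theta)-\mathcal{L}(\theta)|\le\varepsilon'_n\,c(\theta)$ for all $\theta\in\mathcal{H}$. Let $\theta^*\in\arg\min_{\theta\in\mathcal{H}}\mathcal{L}(\theta)$ and $\theta^*_\eta\in\arg\min_{\theta\in\mathcal{H}}\mathcal{L}_\eta(\theta)$ exist. Let $\alpha\ge2$, $\lambda_n=\alpha\varepsilon_{n,\delta}$, $\xi\ge0$, and let $\widehat{\theta}_\eta$ be any $\xi$-approximate minimizer of the perturbed regularized empirical loss, i.e. $$\widehat{\mathcal{L}}_\eta(\widehat{\theta}_\eta)+\lambda_n\mathcal{R}(\widehat{\theta}_\eta)\le\xi+\inf_{\theta\in\mathcal{H}}\big(\widehat{\mathcal{L}}_\eta(\theta)+\lambda_n\mathcal{R}(\theta)\big).$$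 If $\varepsilon'_n\le\varepsilon_{n,\delta}$, then with probability at least $1-\delta$, $$\mathcal{L}(\widehat{\theta}_\eta)-\mathcal{L}(\theta^* )\le\varepsilon_{n,\delta}\big(\alpha\mathcal{R}(\theta^*_\eta)+c(\theta^*_\eta)\big)+\varepsilon'_n\,c(\theta^* )+\xi.$$
   Context: Setting: data $x^{(1)},\dots,x^{(n)}$ are drawn from an unknown distribution $\mathcal{D}$ and perturbed by noise $\eta^{(i)}$ drawn from a distribution $\mathcal{Q}$ via a map $\psi(x,\eta)$; $\widehat{\mathcal{L}}_\eta$ is the empirical loss on the perturbed samples $\psi(x^{(i)},\eta^{(i)})$, $\mathcal{L}_\eta=\mathbb{E}_{\mathcal{D},\mathcal{Q}}[\widehat{\mathcal{L}}_\eta]$, and $\mathcal{L}=\mathbb{E}_{\mathcal{D}}[\widehat{\mathcal{L}}]$ with $\widehat{\mathcal{L}}$ the empirical loss on the original samples. The rate $\varepsilon_{n,\delta}$ is nonincreasing in $n$ and $\delta$ and tends to $0$ as $n\to\infty$ for each $\delta\in(0,1)$. *)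

(* Defs.v *)
From Stdlib Require Import Reals.
Open Scope R_scope.

(* An abstract "probability" on the sample space Omega (the n perturbed
   samples): any set function on events that is nonnegative, gives the sure
   event probability 1, and is monotone under inclusion.  Every probability
   measure (via its outer measure on arbitrary events) is such a function. *)
Definition is_abstract_prob {Omega : Type} (P : (Omega -> Prop) -> R) : Prop :=
  (forall A, 0 <= P A) /\
  P (fun _ => True) = 1 /\
  (forall A B : Omega -> Prop, (forall w, A w -> B w) -> P A <= P B).

Definition is_eps_rate (epsf : nat -> R -> R) : Prop :=
  (forall (n m : nat) d, (n <= m)%nat -> epsf m d <= epsf n d) /\
  (forall n d1 d2, 0 < d1 -> d1 <= d2 -> d2 < 1 -> epsf n d2 <= epsf n d1) /\
  (forall d, 0 < d < 1 -> Un_cv (fun n => epsf n d) 0).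

Definition is_minimizer {H : Type} (f : H -> R) (theta : H) : Prop :=
  forall t, f theta <= f t.

Definition xi_approx_minimizer {H : Type} (F : H -> R) (xi : R) (x : H) : Prop :=
  forall t, F x <= xi + F t.

(* Main.v *)
Require Import Defs.
From Stdlib Require Import Reals Lra Psatz.
Open Scope R_scope.

Lemma abs_split (x y : R) : Rabs x <= y -> -y <= x <= y.
Proof. intros h. split; [pose proof (Rabs_Ropp x); pose proof (RRle_abs (-x))|pose proof (RRle_abs x)]; rewrite ?Rabs_Ropp in *; lra. Qed.

Theorem theorem2
  (H : Type) (Omega : Type) (P : (Omega -> Prop) -> R)
  (c Reg : H -> R) (L Leta : H -> R) (Lhat : Omega -> H -> R)
  (epsf : nat -> R -> R) (epsp : nat -> R) (n : nat) (delta : R)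
  (r : R -> R) (theta_star theta_eta_star : H)
  (alpha xi : R) (theta_hat : Omega -> H) :
  is_abstract_prob P ->
  is_eps_rate epsf ->
  0 < delta < 1 ->
  (forall t : H, 0 <= c t) ->
  (forall t : H, 0 <= Reg t) ->
  (* (A) scaled uniform convergence *)
  P (fun w => forall t : H, Rabs (Lhat w t - Leta t) <= epsf n delta * c t)
    >= 1 - delta ->
  (* (B) super-scale regularization *)
  (forall z, 0 <= z -> 0 <= r z) ->
  (forall z, 0 <= z -> z <= r z) ->
  (forall t : H, r (c t) <= Reg t) ->
  (* (C) bounded perturbed loss *)
  (forall t : H, Rabs (Leta t - L t) <= epsp n * c t) ->
  is_minimizer L theta_star ->
  is_minimizer Leta theta_eta_star ->
  alpha >= 2 ->
  xi >= 0 ->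
  (forall w : Omega, @xi_approx_minimizer H
      (fun t : H => Lhat w t + alpha * epsf n delta * Reg t) xi (theta_hat w)) ->
  epsp n <= epsf n delta ->
  P (fun w => L (theta_hat w) - L theta_star <=
              epsf n delta * (alpha * Reg theta_eta_star + c theta_eta_star)
              + epsp n * c theta_star + xi)
    >= 1 - delta.
Proof.
  intros [HP0 [HP1 HPm]] [Hmono [_ Hcv]] Hd Hc HR HA Hr0 Hr1 HrR HC Hmin Hmine Ha Hxi Happ Hee.
  assert (He : 0 <= epsf n delta).
  { destruct (Rle_or_lt 0 (epsf n delta)) as [h|h]; [exact h|exfalso].
    destruct (Hcv delta Hd (- epsf n delta)) as [N HN]; [lra|].
    specialize (HN (max N n) (Nat.le_max_l _ _)). unfold R_dist in HN.
    specialize (Hmono n (max N n) delta (Nat.le_max_r _ _)).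
    rewrite Rminus_0_r in HN. rewrite Rabs_left in HN; lra. }
  apply Rle_ge. eapply Rle_trans; [apply Rge_le; exact HA|].
  apply HPm. intros w Hw.
  set (e := epsf n delta) in *. set (th := theta_hat w).
  pose proof (Happ w theta_eta_star) as Hap. simpl in Hap. fold th in Hap.
  pose proof (Hw th) as H1. pose proof (Hw theta_eta_star) as H2.
  pose proof (HC th) as H3. pose proof (HC theta_star) as H4.
  pose proof (Hmine theta_star) as H5.
  apply abs_split in H1. apply abs_split in H2.
  apply abs_split in H3. apply abs_split in H4.
  assert (Hct : c th <= Reg th).
  { eapply Rle_trans; [apply Hr1, Hc|apply HrR]. }
  assert (Hx : (e + epsp n) * c th <= alpha * e * Reg th).
  { apply Rle_trans with (2 * e * c th).
    - pose proof (Hc th). nra.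
    - pose proof (Hc th). assert (0 <= alpha * e) by nra.
      apply Rle_trans with (alpha * e * c th); [nra|].
      apply Rmult_le_compat_l; auto. }
  nra.
Qed.
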